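(* Let $\varepsilon>0$, $\beta,\delta\in(0,1)$, and let $G$ be a graph with at least one edge. Run: set $T=-\frac8\varepsilon\ln\frac4\beta$, $\tilde T=T+\mathrm{Lap}(4/\varepsilon)$; for $\tau=1,2,4,8,\dots$ compute $\tilde Q_\tau=Q_{\mathrm{LP\text{-}Del\text{-}N}}(G,\tau)+\mathrm{Lap}(4/\varepsilon)$ and stop at the first $\tau$ with $\tilde Q_\tau>\tilde T$; output $$\tau^*=3\tau+3|Q_{\mathrm{LP\text{-}Del\text{-}N}}(G,\tau)|+\mathrm{Lap}(6/\varepsilon)+\frac6\varepsilon\ln\max\Big(\frac1\delta,\frac2\beta\Big)+1.$$ Then with probability at least $1-\beta$, $$\tau^*\le6\deg(G)+\frac{24}\varepsilon\ln\log(4\deg(G))+\frac{48}\varepsilon\ln\frac4\beta+\frac{12}\varepsilon\ln\max\Big(\frac1\delta,\frac2\beta\Big)+1$$ and $$N_{\tau^*}(G)\le\frac{24}\varepsilon\ln\log(4\deg(G))+\frac{48}\varepsilon\ln\frac4\beta.$$ Furthermore, with probability at least $1-\delta$, $\tau^*+N_{\tau^*}(G)\le2\tau^*$.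
   Context: Graphs are finite, simple, undirected; $\deg(G)$ is the maximum degree; $E(v)$ is the set of edges at $v$; $N_t(G)$ is the number of nodes of degree at least $t$. $Q_{\mathrm{LP\text{-}Del\text{-}N}}(G,\tau)$ is the optimal value of the LP: maximize $-\sum_{v}x_v$ subject to $y_e\ge1-x_{v'}-x_{v''}$ for every edge $e=(v',v'')$, $\sum_{e\in E(v)}y_e\le\tau$ for every node $v$, and $x_v,y_e\in[0,1]$. $\mathrm{Lap}(b)$ has density $\frac1{2b}e^{-|x|/b}$; all draws are independent. $\ln$ is the natural logarithm and $\log$ the base-2 logarithm. *)

(* Defs.v *)
From HB Require Import structures.
From mathcomp Require Import all_boot all_order all_algebra.
From mathcomp Require Import all_classical all_reals all_analysis.
Set Implicit Arguments. Unset Strict Implicit. Unset Printing Implicit Defensive.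
Import Order.TTheory GRing.Theory Num.Theory.
Import numFieldNormedType.Exports.
Local Open Scope classical_set_scope.
Local Open Scope ring_scope.

Definition simple_graph (V : finType) (adj : rel V) : Prop :=
  symmetric adj /\ irreflexive adj.

Definition degv (V : finType) (adj : rel V) (v : V) : nat := #|[set u | adj v u]|.
Definition maxdeg (V : finType) (adj : rel V) : nat := (\max_(v : V) degv adj v)%N.

Definition Nt {R : realType} (V : finType) (adj : rel V) (t : R) : nat :=
  #|[set v : V | t <= (degv adj v)%:R]|.

(* x : node variables; y : edge variables, indexed by ordered pairs (u,v) with
   adj u v, required symmetric so that it is a function of the unordered edge. *)
Definition lp_feasible {R : realType} (V : finType) (adj : rel V) (tau : R)
  (x : V -> R) (y : V -> V -> R) : Prop :=
  (forall u v, adj u v -> y u v = y v u) /\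
  (forall u v, adj u v -> 1 - x u - x v <= y u v) /\
  (forall v, \sum_(u | adj v u) y v u <= tau) /\
  (forall v, 0 <= x v <= 1) /\
  (forall u v, adj u v -> 0 <= y u v <= 1).

Definition Q_LP {R : realType} (V : finType) (adj : rel V) (tau : R) : R :=
  sup [set r : R | exists x y, lp_feasible adj tau x y /\ r = - \sum_(v : V) x v].

Definition laplace_law {R : realType} d (T : measurableType d)
  (P : probability T R) (X : T -> R) (b : R) : Prop :=
  forall A : set R, measurable A ->
    P (X @^-1` A) =
    (\int[@lebesgue_measure R]_(x in A) ((2 * b)^-1 * expR (- `|x| / b))%:E)%E.

Definition mutually_independent {R : realType} d (T : measurableType d)
  (P : probability T R) (X : nat -> T -> R) : Prop :=
  forall (J : seq nat) (A : nat -> set R), uniq J ->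
    (forall j, measurable (A j)) ->
    P (\bigcap_(j in [set j | j \in J]) (X j @^-1` A j)) =
    (\prod_(j <- J) P (X j @^-1` A j))%E.

(* Noise convention: Z 0 is the noise added to the threshold T,
   Z 1 is the noise Lap(6/eps) in the output, and Z (k+2) is the noise
   added to Q at the k-th round tau = 2^k. *)
Definition thrT {R : realType} (eps beta : R) : R := - (8 / eps) * ln (4 / beta).

Definition Qtilde {R : realType} (V : finType) (adj : rel V) (z : nat -> R) (k : nat) : R :=
  Q_LP adj (2 ^+ k) + z k.+2.

Definition stops_at {R : realType} (V : finType) (adj : rel V) (eps beta : R)
  (z : nat -> R) (k : nat) : Prop :=
  Qtilde adj z k > thrT eps beta + z 0%N /\
  forall j, (j < k)%N -> ~ (Qtilde adj z j > thrT eps beta + z 0%N).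

Definition tau_star {R : realType} (V : finType) (adj : rel V) (eps beta delta : R)
  (z : nat -> R) (k : nat) : R :=
  3 * 2 ^+ k + 3 * `|Q_LP adj (2 ^+ k)| + z 1%N
  + 6 / eps * ln (Num.max (1 / delta) (2 / beta)) + 1.

Definition log2 {R : realType} (x : R) : R := ln x / ln 2.

Definition bound_tau {R : realType} (D eps beta delta : R) : R :=
  6 * D + 24 / eps * ln (log2 (4 * D)) + 48 / eps * ln (4 / beta)
  + 12 / eps * ln (Num.max (1 / delta) (2 / beta)) + 1.

Definition bound_N {R : realType} (D eps beta : R) : R :=
  24 / eps * ln (log2 (4 * D)) + 48 / eps * ln (4 / beta).

(* Main.v *)
Require Import Defs.
From HB Require Import structures.
From mathcomp Require Import all_boot all_order all_algebra.
From mathcomp Require Import all_classical all_reals all_analysis.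
From mathcomp Require Import ring lra.
Import Order.TTheory GRing.Theory Num.Theory.
Import numFieldNormedType.Exports.
Local Open Scope classical_set_scope.
Local Open Scope ring_scope.
From mathcomp Require Import zify.

Section tail.
Context {R : realType}.
Notation mu := (@lebesgue_measure R).

Lemma lap_cont (b : R) : continuous (fun x : R => (2 * b)^-1 * expR (- `|x| / b)).
Proof.
move=> x.
apply: (@continuousM _ R^o (fun=> (2 * b)^-1) (fun x : R => expR (- `|x| / b))).
  exact: cst_continuous.
apply: continuous_comp; last exact: continuous_expR.
apply: continuousM; last exact: cst_continuous.
apply: (@continuousN _ R^o).
exact: norm_continuous.
Qed.

Lemma lap_tail (b t : R) : 0 < b -> 0 <= t ->
  (\int[mu]_(x in `[t, +oo[) ((2 * b)^-1 * expR (- `|x| / b))%:E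
   = (2^-1 * expR (- t / b))%:E)%E.
Proof.
move=> b0 t0.
have cE : continuous (fun x : R => expR (- x / b)).
  move=> x; apply: continuous_comp; last exact: continuous_expR.
  apply: continuousM; last exact: cst_continuous.
  exact: (@continuousN _ R^o).
rewrite (@ge0_continuous_FTC2y _ _ (fun x => - (2^-1 * expR (- x / b))) t 0).
- by rewrite sub0e EFinN oppeK.
- by move=> x _; rewrite mulr_ge0 ?expR_ge0 // invr_ge0 mulr_ge0 // ltW.
- exact/continuous_subspaceT/lap_cont.
- rewrite -oppr0; apply: cvgN; rewrite -(mulr0 (2^-1 : R)).
  apply: cvgMr.
  rewrite (_ : (fun x => expR (- x / b)) =
               (fun z => expR (- z)) \o (fun z => b^-1 * z)); last first.
    by apply: funext => x /=; rewrite mulNr mulrC.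
  apply: (@cvg_comp _ _ _ _ _ _ (pinfty_nbhs R)); last exact: cvgr_expR.
  by apply: gt0_cvgMry; rewrite ?invr_gt0.
- by move=> x _; exact: ex_derive.
- apply/cvg_at_right_filter; apply: cvgN; apply: cvgMr; exact: cE.
- move=> x; rewrite in_itv/= andbT => tx.
  rewrite derive1E deriveN // deriveMl // -derive1E.
  rewrite (_ : (fun x0 => expR (- x0 / b)) = expR \o (fun x0 => (- b^-1) * x0)); last first.
    by apply: funext => y /=; rewrite mulNr mulrC mulNr.
  rewrite derive1_comp // derive1Ml // derive1_id mulr1.
  have -> : expR^`()%classic (- b^-1 * x) = expR (- b^-1 * x).
    by rewrite derive1E derive_val.
  rewrite ger0_norm; last exact: le_trans t0 (ltW tx).
  rewrite (_ : - x / b = - b^-1 * x); last by rewrite mulNr mulrC mulNr.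
  rewrite invfM; ring.
Qed.
End tail.

Lemma degvE (V : finType) (adj : rel V) v : degv adj v = #|[pred u | adj v u]|.
Proof. by apply: eq_card => u; apply/idP/idP; rewrite in_setE. Qed.

Lemma NtE (R : realType) (V : finType) (adj : rel V) (t : R) :
  Nt adj t = #|[pred v | t <= (degv adj v)%:R]|.
Proof. by apply: eq_card => u; apply/idP/idP; rewrite in_setE. Qed.

Section graph.
Context {R : realType} (V : finType) (adj : rel V).

Definition Qset (tau : R) := [set r : R | exists x y, lp_feasible adj tau x y /\ r = - \sum_(v : V) x v].

Lemma sum_adj_const v (c : R) : \sum_(u | adj v u) c = c * (degv adj v)%:R.
Proof.
rewrite degvE mulr_natr -sumr_const.
by apply: eq_bigl => u; rewrite inE.
Qed.

Lemma Qset_ne (tau : R) : 0 <= tau -> Qset tau !=set0.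
Proof.
move=> t0; exists (- \sum_(v : V) (1 : R)), (fun _ => 1), (fun _ _ => 0); split => //.
split; first by [].
split; first by move=> u v _; rewrite subrr add0r lerN10.
split; first by move=> v; rewrite big1.
split; first by move=> v; rewrite ler01 lexx.
by move=> u v _; rewrite lexx ler01.
Qed.

Lemma Qset_ub (tau : R) : ubound (Qset tau) 0.
Proof.
move=> r [x [y [[_ [_ [_ [hx _]]]] ->]]].
rewrite oppr_le0; apply: sumr_ge0 => v _; by case/andP: (hx v).
Qed.

Lemma Qset_has_sup (tau : R) : 0 <= tau -> has_sup (Qset tau).
Proof. by move=> t0; split; [exact: Qset_ne | exists 0; exact: Qset_ub]. Qed.

Lemma Q_le0 (tau : R) : 0 <= tau -> Q_LP adj tau <= 0.
Proof. by move=> t0; apply: ge_sup; [exact: Qset_ne | exact: Qset_ub]. Qed.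

Lemma Q_ge0 (tau : R) : (maxdeg adj)%:R <= tau -> 0 <= Q_LP adj tau.
Proof.
move=> Dt.
have t0 : 0 <= tau by apply: le_trans Dt.
suff : Qset tau 0 by move/(sup_upper_bound (Qset_has_sup _ t0)).
exists (fun _ => 0), (fun _ _ => 1); split; last by rewrite big1 ?oppr0.
split; first by [].
split; first by move=> u v _; rewrite !subr0.
split.
  move=> v; rewrite sum_adj_const mul1r; apply: le_trans Dt.
  by rewrite ler_nat /maxdeg (leq_bigmax v).
split; first by move=> v; rewrite lexx ler01.
by move=> u v _; rewrite lexx ler01.
Qed.

Lemma Nt_bound (tau t : R) : 0 <= tau -> 2 * (tau - Q_LP adj tau) < t ->
  (Nt adj t)%:R <= 2 * (- Q_LP adj tau).
Proof.
move=> t0 ht.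
set q := - Q_LP adj tau.
have hs := Qset_has_sup _ t0.
apply/ler_addgt0Pr => e e0.
set e' := Num.min (e / 2) ((t - 2 * (tau + q)) / 2).
have e'0 : 0 < e'.
  rewrite lt_min divr_gt0 //= divr_gt0 // subr_gt0.
  by rewrite /q; lra.
have e'e : e' <= e / 2 by rewrite ge_min lexx.
have e't : 2 * (tau + q + e') <= t.
  have : e' <= (t - 2 * (tau + q)) / 2 by rewrite ge_min lexx orbT.
  rewrite ler_pdivlMr //; lra.
have [r [x [y [[ysym [hy [hsum [hx hy01]]]] ->]]] hr] := sup_adherent e'0 hs.
have hxs : \sum_(v : V) x v < q + e'.
  by move: hr; rewrite /q -/(Q_LP adj tau) => hr; lra.
have x0 : forall v, 0 <= x v by move=> v; case/andP: (hx v).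
set S := [pred v : V | t <= (degv adj v)%:R].
have xS : forall v, v \in S -> 2^-1 <= x v.
  move=> v; rewrite inE => tv.
  rewrite leNgt; apply/negP => xv.
  have h1 : \sum_(u | adj v u) (1 - x v - x u) <= tau.
    apply: le_trans (hsum v); apply: ler_sum => u /hy; exact.
  have h2 : \sum_(u | adj v u) x u <= \sum_(u : V) x u.
    rewrite [X in _ <= X](bigID (fun u => adj v u)) /= lerDl.
    by apply: sumr_ge0 => u _.
  have h3 : \sum_(u | adj v u) (1 - x v - x u) =
     (1 - x v) * (degv adj v)%:R - \sum_(u | adj v u) x u.
    by rewrite sumrB sum_adj_const.
  have dge0 : 0 <= (degv adj v)%:R :> R by [].
  have h4 : 2^-1 * (degv adj v)%:R <= (1 - x v) * (degv adj v)%:R.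
    by apply: ler_wpM2r => //; lra.
  lra.
have hS : (#|S|%:R : R) * 2^-1 <= \sum_(v : V) x v.
  rewrite mulrC mulr_natr -sumr_const.
  apply: (@le_trans _ _ (\sum_(v in S) x v)); first by apply: ler_sum => v /xS.
  rewrite [X in _ <= X](bigID (fun v => v \in S)) /= lerDl.
  by apply: sumr_ge0 => u _.
rewrite NtE -/S.
move: hS hxs e'e; clearbody e'; clear.
move=> hS hxs e'e.
lra.
Qed.
End graph.


Lemma min_exists (P : nat -> Prop) n : P n ->
  exists k, P k /\ (k <= n)%N /\ forall j, (j < k)%N -> ~ P j.
Proof.
elim: n {-2}n (leqnn n) => [|N IH] n hn Pn.
  exists n; split => //; split => // j jn; lia.
case: (pselect (exists j, (j < n)%N /\ P j)) => [[j [jn Pj]]|nj].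
  have [k [Pk [kj hk]]] := IH j ltac:(lia) Pj.
  by exists k; split => //; split => //; lia.
exists n; split => //; split => // j jn Pj; apply: nj; by exists j.
Qed.

Section det.
Context {R : realType} (V : finType) (adj : rel V) (eps beta delta : R).
Hypotheses (he : 0 < eps) (hb : 0 < beta < 1) (hd : 0 < delta < 1).

Definition cond (z : nat -> R) k := Qtilde adj z k > thrT eps beta + z 0%N.

Lemma stops_min (z : nat -> R) n : cond z n ->
  exists k, stops_at adj eps beta z k /\ (k <= n)%N.
Proof.
move=> /(@min_exists (cond z)) [k [Pk [kn hk]]]; exists k; split => //; split => //.
Qed.

Lemma Q_nonpos k : Q_LP adj ((2:R) ^+ k) <= 0.
Proof. by apply: Q_le0; rewrite exprn_ge0. Qed.

Lemma ts_lower (z : nat -> R) k :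
  - (6 / eps * ln (Num.max (1 / delta) (2 / beta))) <= z 1%N ->
  2 * ((2:R) ^+ k - Q_LP adj (2 ^+ k)) < tau_star adj eps beta delta z k /\
  3 * ((2:R) ^+ k) + 3 * (- Q_LP adj (2 ^+ k)) + 1 <= tau_star adj eps beta delta z k.
Proof.
move=> hz.
have hq := Q_nonpos k.
have h2 : 1 <= (2:R) ^+ k by apply: exprn_ege1; lra.
rewrite /tau_star ler0_norm //.
lra.
Qed.

Lemma det3 (z : nat -> R) n : cond z n ->
  - (6 / eps * ln (Num.max (1 / delta) (2 / beta))) <= z 1%N ->
  exists k, stops_at adj eps beta z k /\
    let ts := tau_star adj eps beta delta z k in
    ts + (Nt adj ts)%:R <= 2 * ts.
Proof.
move=> /stops_min [k [sk _]] hz; exists k; split => // ts.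
have [h1 h2] := ts_lower z k hz.
have hN := Nt_bound _ adj _ _ (exprn_ge0 k (ler0n R 2)) h1.
have hq := Q_nonpos k.
have h3 : 1 <= (2:R) ^+ k by apply: exprn_ege1; lra.
rewrite -/ts in h2 hN.
lra.
Qed.

Lemma maxdeg_ge1 : (exists u v, adj u v) -> (1 <= maxdeg adj)%N.
Proof.
move=> [u [v huv]]; apply: leq_trans (leq_bigmax u).
rewrite degvE; apply/card_gt0P; by exists v.
Qed.

Definition k0 := up_log 2 (maxdeg adj).

Lemma k0_nat : (1 <= maxdeg adj)%N ->
  (maxdeg adj <= 2 ^ k0)%N /\ (2 ^ k0 < 2 * maxdeg adj)%N.
Proof.
move=> h1; rewrite /k0.
case: (ltngtP (maxdeg adj) 1) => [|hD|->]; first lia; last by rewrite up_log1.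
have [/= b1 b2] := andP (up_log_bounds (isT : (1 < 2)%N) hD).
split => //.
have : (0 < up_log 2 (maxdeg adj))%N by rewrite up_log_gt0 hD.
case: (up_log 2 (maxdeg adj)) b1 => // j /= b1 _.
by rewrite expnS; lia.
Qed.

Lemma k0_real : (1 <= maxdeg adj)%N ->
  [/\ (maxdeg adj)%:R <= (2:R) ^+ k0, (2:R) ^+ k0 < 2 * (maxdeg adj)%:R &
      (k0.+1)%:R <= log2 (4 * (maxdeg adj)%:R : R)].
Proof.
move=> h1; have [n1 n2] := k0_nat h1.
have e2 : (2:R) ^+ k0 = (2 ^ k0)%:R by rewrite natrX.
split.
- by rewrite e2 ler_nat.
- by rewrite e2 -natrM ltr_nat.
- have h4 : (2:R) ^+ k0.+1 < 4 * (maxdeg adj)%:R.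
    rewrite exprS e2 -!natrM ltr_nat.
    move: n2; generalize (2 ^ k0)%N => X; lia.
  have l2 : 0 < ln (2:R) by apply: ln_gt0; lra.
  have e3 : ln ((2:R) ^+ k0.+1) = (k0.+1)%:R * ln 2.
    by rewrite lnXn ?ltr0n // mulr_natl.
  rewrite /log2 (ler_pdivlMr _ _ l2) -e3.
  apply: ltW; rewrite ltr_ln ?posrE ?exprn_gt0 ?mulr_gt0 ?ltr0n //.
Qed.

Lemma det1 (z : nat -> R) :
  (exists u v, adj u v) ->
  let D : R := (maxdeg adj)%:R in
  let s := ln (4 / beta) in
  let lL := ln (log2 (4 * D)) in
  z 0%N < 4 / eps * s ->
  - (4 / eps * (lL + s)) < z 0%N ->
  - (4 / eps * s) < z k0.+2 ->
  (forall k, (k <= k0)%N -> z k.+2 < 4 / eps * (lL + s)) ->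
  - (6 / eps * ln (2 / beta)) < z 1%N ->
  z 1%N < 6 / eps * ln (2 / beta) ->
  exists k, stops_at adj eps beta z k /\
    let ts := tau_star adj eps beta delta z k in
    ts <= bound_tau D eps beta delta /\ (Nt adj ts)%:R <= bound_N D eps beta.
Proof.
move=> hedge D s lL H0 H0' Hk0 Hk H1 H1'.
have [kD1 kD2 kD3] := k0_real (maxdeg_ge1 hedge).
set A := 4 / eps * s.
set C := 4 / eps * (lL + s).
set Mm := 6 / eps * ln (2 / beta).
set ML := 6 / eps * ln (Num.max (1 / delta) (2 / beta)).
rewrite -/A in H0 Hk0; rewrite -/C in H0' Hk; rewrite -/Mm in H1 H1'.
have f1 : 8 / eps * s = 2 * A by rewrite /A; ring.
have f4 : Mm <= ML.
  have b0 : 0 < 2 / beta by apply: divr_gt0; [lra | by case/andP: hb].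
  rewrite /Mm /ML; apply: ler_wpM2l; first by rewrite divr_ge0 // ltW.
  rewrite ler_ln ?posrE //; first by rewrite le_max lexx orbT.
  by rewrite lt_max b0 orbT.
have ck0 : cond z k0.
  have hq : 0 <= Q_LP adj ((2:R) ^+ k0) by apply: Q_ge0.
  rewrite /cond /Qtilde /thrT -/s.
  have : - (8 / eps) * s = - (2 * A) by rewrite mulNr f1.
  lra.
have [k [sk kk0]] := stops_min _ _ ck0.
exists k; split => //.
move=> ts.
have ck := sk.1; move: ck; rewrite /Qtilde /thrT -/s => ck.
have f1' : - (8 / eps) * s = - (2 * A) by rewrite mulNr f1.
have hq := Q_nonpos k.
have hk := Hk k kk0.
have hp : (2:R) ^+ k <= 2 ^+ k0 by rewrite ler_eXn2l //; lra.
have hp1 : 1 <= (2:R) ^+ k by apply: exprn_ege1; lra.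
have fN : bound_N D eps beta = 6 * C + 6 * A.
  rewrite /bound_N /C /A -/lL -/s; ring.
have fT : bound_tau D eps beta delta = 6 * D + 6 * C + 6 * A + 2 * ML + 1.
  by rewrite /bound_tau /C /A /ML -/lL -/s; ring.
have hz : - ML <= z 1%N by lra.
have [h1 h2] := ts_lower z k hz.
have hN := Nt_bound _ adj _ _ (exprn_ge0 k (ler0n R 2)) h1.
rewrite -/ts in h1 h2 hN.
have tsE : ts = 3 * 2 ^+ k + 3 * - Q_LP adj (2 ^+ k) + z 1%N + ML + 1.
  by rewrite /ts /tau_star ler0_norm.
rewrite fN fT; split; lra.
Qed.
End det.


Section prob.
Context {R : realType} (d : measure_display) (T : measurableType d) (P : probability T R).

Lemma lap_ge (X : {RV P >-> R}) (b u : R) : laplace_law P X b -> 0 < b -> 0 <= u ->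
  P (X @^-1` `[b * u, +oo[) = (2^-1 * expR (- u))%:E.
Proof.
move=> hX b0 u0.
rewrite hX // lap_tail //; last by rewrite mulr_ge0 // ltW.
have -> : - (b * u) / b = - u by field; rewrite gt_eqF.
by [].
Qed.

Lemma lap_le (X : {RV P >-> R}) (b u : R) : laplace_law P X b -> 0 < b -> 0 <= u ->
  P (X @^-1` `]-oo, - (b * u)]) = (2^-1 * expR (- u))%:E.
Proof.
move=> hX b0 u0.
rewrite hX //.
rewrite ge0_integration_by_substitutionNy.
- rewrite -(lap_ge X b u hX b0 u0) hX //.
  by apply: eq_integral => x _ /=; rewrite normrN.
- exact/continuous_subspaceT/lap_cont.
- by move=> x _; rewrite mulr_ge0 ?expR_ge0 // invr_ge0 mulr_ge0 // ltW.
Qed.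


Lemma union_bound_ord (F : nat -> set T) n (p : R) : (forall k, measurable (F k)) ->
  (forall k, (k < n)%N -> (P (F k) <= p%:E)%E) ->
  (P (\big[setU/set0]_(k < n) F k) <= (n%:R * p)%:E)%E.
Proof.
move=> mF; elim: n => [|n IH] hF.
  by rewrite big_ord0 measure0 mul0r.
rewrite big_ord_recr /=.
apply: le_trans (measureU2 _ _ _) _.
- by apply: bigsetU_measurable => i _.
- exact: mF.
rewrite -natr1 mulrDl mul1r EFinD; apply: leeD.
  by apply: IH => k kn; apply: hF; apply: ltnW.
exact: hF.
Qed.

Lemma in_bigU (F : nat -> set T) n k : (k < n)%N -> F k `<=` \big[setU/set0]_(i < n) F i.
Proof.
move=> kn; rewrite -bigcup_mkord => w Fw.
by exists k => //=.
Qed.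

Lemma prod_bound (f : nat -> \bar R) (J : seq nat) (q : R) : 0 <= q ->
  (forall j, j \in J -> (0 <= f j)%E /\ (f j <= q%:E)%E) ->
  (\prod_(j <- J) f j <= (q ^+ size J)%:E)%E.
Proof.
move=> q0; elim: J => [|j J IH] hf; first by rewrite big_nil expr0.
rewrite big_cons /= exprS EFinM.
have [h1 h2] := hf j (mem_head _ _).
apply: lee_pmul => //.
  rewrite big_seq; apply: prode_ge0 => i iJ.
  by case: (hf i); rewrite // inE iJ orbT.
by apply: IH => i iJ; apply: hf; rewrite inE iJ orbT.
Qed.

Lemma le_notge (X : {RV P >-> R}) (s c : R) : s < c ->
  (P (X @^-1` `]-oo, s]) <= 1 - P (X @^-1` `[c, +oo[))%E.
Proof.
move=> sc.
rewrite -probability_setC; last exact: measurable_funPTI.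
apply: le_measure; rewrite ?inE.
- exact: measurable_funPTI.
- by apply: measurableC; exact: measurable_funPTI.
move=> w /=; rewrite !in_itv /= => h1 h2.
lra.
Qed.

End prob.

Lemma geom_small {R : realType} (p eta : R) : 0 < p -> p <= 1 -> 0 < eta ->
  exists n, (1 - p) ^+ n <= eta.
Proof.
move=> p0 p1 e0.
set n := (Num.truncn ((p * eta)^-1)).+1.
have hn : (p * eta)^-1 < n%:R by apply: truncnS_gt.
exists n.
have h1 : (1 - p) ^+ n <= expR (- p) ^+ n.
  apply: lerXn2r; rewrite ?nnegrE ?expR_ge0 //; first lra.
  have := expR_ge1Dx (- p); lra.
apply: le_trans h1 _.
rewrite -expRM_natl mulrN expRN.
have hpn : 0 < n%:R * p by rewrite mulr_gt0 // ltr0n.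
have h2 : n%:R * p <= expR (n%:R * p).
  have := expR_ge1Dx (n%:R * p); lra.
have h3 : eta^-1 < n%:R * p.
  move: hn; rewrite invfM -ltr_pdivrMr // => h; lra.
rewrite -[eta]invrK lef_pV2 ?posrE ?invr_gt0 ?expR_gt0 //.
lra.
Qed.



Lemma U2 {R : realType} (d : measure_display) (T : measurableType d) (P : probability T R)
  (A B : set T) (x y : R) : measurable A -> measurable B ->
  (P A <= x%:E)%E -> (P B <= y%:E)%E -> (P (A `|` B) <= (x + y)%:E)%E.
Proof.
move=> mA mB hA hB; apply: le_trans (measureU2 _ mA mB) _.
by rewrite EFinD; apply: leeD.
Qed.

Lemma notge_lt {R : realType} (x c : R) : ~ (`[c, +oo[%classic x) -> x < c.
Proof. by move=> h; rewrite ltNge; apply/negP => hc; apply: h; rewrite /= in_itv /= hc. Qed.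

Lemma notle_gt {R : realType} (x c : R) : ~ (`]-oo, c]%classic x) -> c < x.
Proof. by move=> h; rewrite ltNge; apply/negP => hc; apply: h; rewrite /= in_itv /= hc. Qed.

Lemma expRNln {R : realType} (y : R) : 0 < y -> expR (- ln y) = y^-1.
Proof. by move=> y0; rewrite expRN lnK. Qed.

Theorem claim1 (R : realType) (d : measure_display) (T : measurableType d)
  (P : probability T R) (Z : nat -> {RV P >-> R})
  (V : finType) (adj : rel V) (eps beta delta : R) :
  0 < eps -> 0 < beta < 1 -> 0 < delta < 1 ->
  (exists u v, adj u v) ->
  laplace_law P (Z 0%N) (4 / eps) ->
  laplace_law P (Z 1%N) (6 / eps) ->
  (forall k, laplace_law P (Z k.+2) (4 / eps)) ->
  let D : R := (maxdeg adj)%:R in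
  (exists E : set T, measurable E /\
     E `<=` [set w | exists k, stops_at adj eps beta (fun j => Z j w) k /\
        let ts := tau_star adj eps beta delta (fun j => Z j w) k in
        ts <= bound_tau D eps beta delta /\
        (Nt adj ts)%:R <= bound_N D eps beta] /\
     (1 - beta%:E <= P E)%E).
Proof.
move=> he hb hd hedge h0 h1 hk D.
have [b0 b1] := andP hb.
have Dn1 := maxdeg_ge1 V adj hedge.
have [kD1 kD2 kD3] := k0_real V adj eps beta delta he hb hd Dn1.
have b40 : 0 < 4 / eps by rewrite divr_gt0.
have b60 : 0 < 6 / eps by rewrite divr_gt0.
set s := ln (4 / beta).
set L := log2 (4 * D).
set lL := ln L.
set m2 := ln (2 / beta).
have L1 : 1 <= L by apply: le_trans kD3; rewrite ler1n.
have L0 : 0 < L by lra.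
have s0 : 0 <= s by apply: ln_ge0; rewrite ler_pdivlMr // mul1r; lra.
have lL0 : 0 <= lL by apply: ln_ge0.
have m20 : 0 <= m2 by apply: ln_ge0; rewrite ler_pdivlMr // mul1r; lra.
set B1 := Z 0%N @^-1` `[4 / eps * s, +oo[.
set B2 := Z 0%N @^-1` `]-oo, - (4 / eps * (lL + s))].
set B3 := Z (k0 V adj).+2 @^-1` `]-oo, - (4 / eps * s)].
set F4 := fun k => Z k.+2 @^-1` `[4 / eps * (lL + s), +oo[.
set B4 := \big[setU/set0]_(k < (k0 V adj).+1) F4 k.
set B5 := Z 1%N @^-1` `]-oo, - (6 / eps * m2)].
set B6 := Z 1%N @^-1` `[6 / eps * m2, +oo[.
have mF4 : forall k, measurable (F4 k) by move=> k; exact: measurable_funPTI.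
have mB1 : measurable B1 by exact: measurable_funPTI.
have mB2 : measurable B2 by exact: measurable_funPTI.
have mB3 : measurable B3 by exact: measurable_funPTI.
have mB4 : measurable B4 by apply: bigsetU_measurable => k _.
have mB5 : measurable B5 by exact: measurable_funPTI.
have mB6 : measurable B6 by exact: measurable_funPTI.
have e1 : 2^-1 * expR (- s) = beta / 8.
  rewrite expRNln ?invf_div; first by field.
  by rewrite divr_gt0.
have e2 : 2^-1 * expR (- (lL + s)) = L^-1 * (beta / 8).
  rewrite opprD expRD expRNln // mulrCA e1 //.
have e2' : L^-1 * (beta / 8) <= beta / 8.
  rewrite ler_pdivrMl // ler_peMl //; lra.
have e3 : 2^-1 * expR (- m2) = beta / 4.
  rewrite expRNln ?invf_div; first by field.
  by rewrite divr_gt0.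
have p1 : (P B1 <= (beta / 8)%:E)%E by rewrite /B1 lap_ge // e1.
have p2 : (P B2 <= (beta / 8)%:E)%E by rewrite /B2 lap_le ?addr_ge0 // e2 lee_fin.
have p3 : (P B3 <= (beta / 8)%:E)%E by rewrite /B3 lap_le // e1.
have p4 : (P B4 <= (beta / 8)%:E)%E.
  apply: le_trans (union_bound_ord _ _ P F4 (k0 V adj).+1 (L^-1 * (beta / 8)) mF4 _) _.
    by move=> k _; rewrite /F4 lap_ge ?addr_ge0 // e2.
  rewrite lee_fin mulrA -[X in _ <= X]mul1r ler_wpM2r //; first by lra.
  by rewrite ler_pdivrMr // mul1r.
have p5 : (P B5 <= (beta / 4)%:E)%E by rewrite /B5 lap_le // e3.
have p6 : (P B6 <= (beta / 4)%:E)%E by rewrite /B6 lap_ge // e3.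
have mU : measurable (B1 `|` B2 `|` B3 `|` B4 `|` B5 `|` B6).
  by repeat apply: measurableU.
have pU : (P (B1 `|` B2 `|` B3 `|` B4 `|` B5 `|` B6) <= beta%:E)%E.
  have -> : beta = beta / 8 + beta / 8 + beta / 8 + beta / 8 + beta / 4 + beta / 4 by field.
  repeat apply: U2; by repeat apply: measurableU.
exists (~` (B1 `|` B2 `|` B3 `|` B4 `|` B5 `|` B6)); split; first exact: measurableC.
split; last first.
  by rewrite probability_setC //; apply: leeB.
move=> w hw.
have nB : forall A : set T, A `<=` (B1 `|` B2 `|` B3 `|` B4 `|` B5 `|` B6) -> ~ A w.
  by move=> A hA hAw; apply: hw; exact: hA.
have n1 := notge_lt _ _ (nB B1 ltac:(by move=> x hx; do 5 left)).
have n2 := notle_gt _ _ (nB B2 ltac:(by move=> x hx; do 4 left; right)).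
have n3 := notle_gt _ _ (nB B3 ltac:(by move=> x hx; do 3 left; right)).
have n4 : forall k, (k <= k0 V adj)%N -> Z k.+2 w < 4 / eps * (lL + s).
  move=> k kk; apply: notge_lt => h.
  apply: (nB B4 ltac:(by move=> x hx; do 2 left; right)).
  exact: (in_bigU _ _ F4 (k0 V adj).+1 k kk _ h).
have n5 := notle_gt _ _ (nB B5 ltac:(by move=> x hx; left; right)).
have n6 := notge_lt _ _ (nB B6 ltac:(by move=> x hx; right)).
exact: (det1 V adj eps beta delta he hb hd (fun j => Z j w) hedge n1 n2 n3 n4 n5 n6).
Qed.

Theorem claim3 (R : realType) (d : measure_display) (T : measurableType d)
  (P : probability T R) (Z : nat -> {RV P >-> R})
  (V : finType) (adj : rel V) (eps beta delta : R) :
  0 < eps -> 0 < beta < 1 -> 0 < delta < 1 ->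
  (exists u v, adj u v) ->
  mutually_independent P (fun j => (Z j : T -> R)) ->
  laplace_law P (Z 0%N) (4 / eps) ->
  laplace_law P (Z 1%N) (6 / eps) ->
  (forall k, laplace_law P (Z k.+2) (4 / eps)) ->
  (exists E : set T, measurable E /\
     E `<=` [set w | exists k, stops_at adj eps beta (fun j => Z j w) k /\
        let ts := tau_star adj eps beta delta (fun j => Z j w) k in
        ts + (Nt adj ts)%:R <= 2 * ts] /\
     (1 - delta%:E <= P E)%E).
Proof.
move=> he hb hd hedge hind h0 h1 hk.
have [b0 b1] := andP hb.
have [d0 d1] := andP hd.
have Dn1 := maxdeg_ge1 V adj hedge.
have [kD1 kD2 kD3] := k0_real V adj eps beta delta he hb hd Dn1.
have b40 : 0 < 4 / eps by rewrite divr_gt0.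
have b60 : 0 < 6 / eps by rewrite divr_gt0.
set u7 := ln (1 / delta).
set mz := ln (2 / delta).
have u70 : 0 <= u7 by apply: ln_ge0; rewrite ler_pdivlMr // mul1r; lra.
have mz0 : 0 <= mz by apply: ln_ge0; rewrite ler_pdivlMr // mul1r; lra.
set s3 := thrT eps beta + 4 / eps * mz.
set u' := (`|s3| + 1) / (4 / eps).
have u'0 : 0 <= u' by rewrite divr_ge0 // ?addr_ge0 // ltW.
have s3u : s3 < 4 / eps * u'.
  rewrite /u' mulrC divfK ?gt_eqF //.
  have := ler_norm s3; lra.
set p := 2^-1 * expR (- u').
have p0 : 0 < p by rewrite mulr_gt0 ?expR_gt0.
have p1 : p <= 1.
  have : expR (- u') <= 1 by rewrite -expR0 ler_expR; lra.
  rewrite /p; lra.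
have [n hn] := geom_small p (delta / 4) p0 p1 ltac:(by rewrite divr_gt0).
set J := iota (k0 V adj).+2 n.
set B7 := Z 1%N @^-1` `]-oo, - (6 / eps * u7)].
set B8 := Z 0%N @^-1` `[4 / eps * mz, +oo[.
set B9 := \bigcap_(j in [set j | j \in J]) (Z j @^-1` `]-oo, s3]).
have mB7 : measurable B7 by exact: measurable_funPTI.
have mB8 : measurable B8 by exact: measurable_funPTI.
have mB9 : measurable B9.
  by apply: bigcap_measurableType => j _; exact: measurable_funPTI.
have p7 : (P B7 <= (delta / 2)%:E)%E.
  rewrite /B7 lap_le // expRNln ?div1r ?invrK ?invr_gt0 // lee_fin; lra.
have p8 : (P B8 <= (delta / 4)%:E)%E.
  rewrite /B8 lap_ge // expRNln ?invf_div ?divr_gt0 // lee_fin; lra.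
have p9 : (P B9 <= (delta / 4)%:E)%E.
  rewrite /B9 (hind J (fun _ => (`]-oo, s3]%classic : set R)) (iota_uniq _ _) (fun _ => measurable_itv _)).
  apply: le_trans (prod_bound _ J (1 - p) _ _) _.
  - lra.
  - move=> j; rewrite mem_iota => /andP[j1 j2].
    case: j j1 j2 => [|[|k]] j1 j2; [by [] | by [] | ].
    split; first exact: measure_ge0.
    apply: le_trans (le_notge _ _ P (Z k.+2) s3 (4 / eps * u') s3u) _.
    by rewrite lap_ge // -EFinB.
  by rewrite size_iota lee_fin.
have mU : measurable (B7 `|` B8 `|` B9) by repeat apply: measurableU.
have pU : (P (B7 `|` B8 `|` B9) <= delta%:E)%E.
  have -> : delta = delta / 2 + delta / 4 + delta / 4 by field.
  repeat apply: U2; by repeat apply: measurableU.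
exists (~` (B7 `|` B8 `|` B9)); split; first exact: measurableC.
split; last first.
  by rewrite probability_setC //; apply: leeB.
move=> w hw.
have nB : forall A : set T, A `<=` (B7 `|` B8 `|` B9) -> ~ A w.
  by move=> A hA hAw; apply: hw; exact: hA.
have n7 := notle_gt _ _ (nB B7 ltac:(by move=> x hx; do 2 left)).
have n8 := notge_lt _ _ (nB B8 ltac:(by move=> x hx; left; right)).
have [j [jJ hj]] : exists j, j \in J /\ s3 < Z j w.
  case: (pselect (exists j, j \in J /\ s3 < Z j w)) => // hne.
  exfalso; apply: (nB B9 ltac:(by move=> x hx; right)).
  move=> j /= jJ; rewrite in_itv /= leNgt; apply/negP => h.
  by apply: hne; exists j.
move: jJ; rewrite mem_iota => /andP[j1 j2].
case: j j1 j2 hj => [|[|k]] j1 j2 hj; [by [] | by [] | ].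
have hc : cond V adj eps beta (fun j => Z j w) k.
  have hq : 0 <= Q_LP adj ((2:R) ^+ k).
    apply: Q_ge0; apply: le_trans kD1 _.
    rewrite ler_eXn2l; [exact: j1 | lra].
  rewrite /cond /Qtilde /=.
  move: hj; rewrite /s3 => hj; lra.
have hz : - (6 / eps * ln (Num.max (1 / delta) (2 / beta))) <= Z 1%N w.
  have : u7 <= ln (Num.max (1 / delta) (2 / beta)).
    rewrite ler_ln ?posrE ?le_max ?lexx //; first by rewrite divr_gt0.
    by rewrite lt_max divr_gt0.
  move=> hu; have : 6 / eps * u7 <= 6 / eps * ln (Num.max (1 / delta) (2 / beta)).
    by rewrite ler_pM2l.
  lra.
exact: (det3 V adj eps beta delta (fun j => Z j w) k hc hz).
Qed.

Theorem mainTheorem8 (R : realType) (d : measure_display) (T : measurableType d)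
  (P : probability T R) (Z : nat -> {RV P >-> R})
  (V : finType) (adj : rel V) (eps beta delta : R) :
  0 < eps -> 0 < beta < 1 -> 0 < delta < 1 ->
  simple_graph adj -> (exists u v, adj u v) ->
  mutually_independent P (fun j => (Z j : T -> R)) ->
  laplace_law P (Z 0%N) (4 / eps) ->
  laplace_law P (Z 1%N) (6 / eps) ->
  (forall k, laplace_law P (Z k.+2) (4 / eps)) ->
  let D : R := (maxdeg adj)%:R in
  (exists E : set T, measurable E /\
     E `<=` [set w | exists k, stops_at adj eps beta (fun j => Z j w) k /\
        let ts := tau_star adj eps beta delta (fun j => Z j w) k in
        ts <= bound_tau D eps beta delta /\
        (Nt adj ts)%:R <= bound_N D eps beta] /\
     (1 - beta%:E <= P E)%E) /\
  (exists E : set T, measurable E /\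
     E `<=` [set w | exists k, stops_at adj eps beta (fun j => Z j w) k /\
        let ts := tau_star adj eps beta delta (fun j => Z j w) k in
        ts + (Nt adj ts)%:R <= 2 * ts] /\
     (1 - delta%:E <= P E)%E).
Proof.
move=> he hb hd hsg hedge hind h0 h1 hk D; split.
- exact: (claim1 R d T P Z V adj eps beta delta he hb hd hedge h0 h1 hk).
- exact: (claim3 R d T P Z V adj eps beta delta he hb hd hedge hind h0 h1 hk).
Qed.
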